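(* Let $M$ be a finite monoid. (i) $|\mathsf F_M|=|\mathsf F_{M^{op}}|$, i.e. the topoi of right $M$-sets and of right $M^{op}$-sets have the same number of isomorphism classes of points. (ii) If $\mathsf p$ is the point of the topos of right $M$-sets corresponding to the filtered left $M$-set $Me$ for an idempotent $e$, then there is an isomorphism of monoids $\mathrm{End}(\mathsf p)\cong (eMe)^{op}$. (iii) There is a bijection $\mathsf F_M\cong \mathsf{Idem}_{\mathfrak I}(M)$, sending the class of $Me$ to the $\mathfrak I$-class of $e$.
   Context: Points of the topos of right $M$-sets correspond (Diaconescu) to filtered left $M$-sets $A$ (those for which $(-)\otimes_M A$ from right $M$-sets to sets preserves finite limits); $\mathsf F_M$ is the set of isomorphism classes of points. $M^{op}$ is the opposite monoid. $eMe=\{eme\mid m\in M\}$ is a monoid under multiplication with identity $e$. Green's relation $\mathfrak I$ on idempotents: $e\,\mathfrak I\, f$ iff $MeM=MfM$; $\mathsf{Idem}_{\mathfrak I}(M)$ is the set of $\mathfrak I$-classes of idempotents of $M$. *)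

(* Defs.v *)
From Stdlib Require Import List Relations ProofIrrelevance.
Set Implicit Arguments.
Unset Strict Implicit.

Record monoid := Monoid {
  mcar :> Type;
  mmul : mcar -> mcar -> mcar;
  mone : mcar;
  mmulA : forall x y z, mmul x (mmul y z) = mmul (mmul x y) z;
  mmul1m : forall x, mmul mone x = x;
  mmulm1 : forall x, mmul x mone = x }.

Definition finite_monoid (M : monoid) : Prop :=
  exists l : list M, forall x : M, In x l.

Definition Mop (M : monoid) : monoid :=
  @Monoid (mcar M) (fun x y => mmul y x) (mone M)
    (fun x y z => eq_sym (mmulA z y x)) (@mmulm1 M) (@mmul1m M).

Definition mon_iso (M N : monoid) : Prop :=
  exists (phi : M -> N) (psi : N -> M),
    (forall x, psi (phi x) = x) /\ (forall y, phi (psi y) = y) /\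
    phi (mone M) = mone N /\
    (forall x y, phi (mmul x y) = mmul (phi x) (phi y)).

Section MSets.
Variable M : monoid.
Local Notation "x * y" := (mmul x y).
Local Notation "1" := (mone M).

Record lmset := LMSet {
  lcar :> Type;
  lact : M -> lcar -> lcar;
  lact1 : forall a, lact 1 a = a;
  lactM : forall m n a, lact (m * n) a = lact m (lact n a) }.

Definition lhom (A B : lmset) (f : A -> B) : Prop :=
  forall m a, f (lact m a) = lact m (f a).

Definition liso (A B : lmset) : Prop :=
  exists (f : A -> B) (g : B -> A),
    lhom f /\ lhom g /\ (forall a, g (f a) = a) /\ (forall b, f (g b) = b).

Record rmset := RMSet {
  rcar :> Type;
  ract : rcar -> M -> rcar;
  ract1 : forall x, ract x 1 = x;
  ractM : forall x m n, ract x (m * n) = ract (ract x m) n }.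

Record rmhom (X Y : rmset) := RMHom {
  rhfun :> X -> Y;
  rhomP : forall x m, rhfun (ract x m) = ract (rhfun x) m }.

Definition rterm : rmset :=
  @RMSet unit (fun x _ => x) (fun _ => eq_refl) (fun _ _ _ => eq_refl).

Definition rprod (X Y : rmset) : rmset.
Proof.
refine (@RMSet (X * Y)%type (fun p m => (ract (fst p) m, ract (snd p) m)) _ _).
- intros [x y]; simpl; rewrite !ract1; reflexivity.
- intros [x y] m n; simpl; rewrite !ractM; reflexivity.
Defined.

Lemma requal_act_proof (X Y : rmset) (f g : rmhom X Y) (x : X) (m : M) :
  f x = g x -> f (ract x m) = g (ract x m).
Proof. intro Hx; rewrite (rhomP f), (rhomP g), Hx; reflexivity. Qed.

Definition requal (X Y : rmset) (f g : rmhom X Y) : rmset.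
Proof.
refine (@RMSet {x : X | f x = g x}
          (fun x m => exist _ (ract (proj1_sig x) m)
                        (requal_act_proof m (proj2_sig x))) _ _).
- intros [x Hx]; simpl; apply eq_sig_hprop;
    [intros; apply proof_irrelevance | simpl; apply ract1].
- intros [x Hx] m n; simpl; apply eq_sig_hprop;
    [intros; apply proof_irrelevance | simpl; apply ractM].
Defined.

(* X (x)_M A is the quotient of X * A by the equivalence relation
   generated by (x m, a) ~ (x, m a); we work with representatives. *)
Inductive tstep (X : rmset) (A : lmset) : (X * A)%type -> (X * A)%type -> Prop :=
  | TStep : forall (x : X) (m : M) (a : A), tstep (ract x m, a) (x, lact m a).

Definition teq (X : rmset) (A : lmset) : (X * A)%type -> (X * A)%type -> Prop :=
  clos_refl_sym_trans _ (@tstep X A).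

(* A is filtered iff (-) (x)_M A : right M-sets -> sets preserves finite
   limits, i.e. preserves the terminal object, binary products and
   equalizers (the canonical comparison maps are bijections). *)
Definition filtered (A : lmset) : Prop :=
  (* 1 (x) A  ->  1  is a bijection *)
  (inhabited (lcar A) /\ forall a b : A, teq (X:=rterm) (tt, a) (tt, b)) /\
  (* (X * Y) (x) A -> (X (x) A) * (Y (x) A) is a bijection *)
  (forall X Y : rmset,
     (forall (x : X) (y : Y) (a b : A), exists (x' : X) (y' : Y) (c : A),
        teq (x', c) (x, a) /\ teq (y', c) (y, b)) /\
     (forall (x x' : X) (y y' : Y) (a a' : A),
        teq (x, a) (x', a') -> teq (y, a) (y', a') ->
        teq (X:=rprod X Y) ((x, y), a) ((x', y'), a'))) /\
  (* Eq(f,g) (x) A -> X (x) A is injective with image Eq(f (x) A, g (x) A) *)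
  (forall (X Y : rmset) (f g : rmhom X Y),
     (forall (u u' : requal f g) (a a' : A),
        teq (proj1_sig u, a) (proj1_sig u', a') ->
        teq (X:=requal f g) (u, a) (u', a')) /\
     (forall (x : X) (a : A), teq (f x, a) (g x, a) ->
        exists (u : requal f g) (a' : A), teq (proj1_sig u, a') (x, a))).

(* the filtered left M-sets (representatives of points of the topos of
   right M-sets, by Diaconescu's theorem) *)
Definition FiltM : Type := {A : lmset | filtered A}.

Definition idem (e : M) : Prop := e * e = e.

Definition Jrel (e f : M) : Prop :=
  forall x : M, (exists m n, x = m * e * n) <-> (exists m n, x = m * f * n).

Lemma Me_proof (e m : M) (x : {x : M | exists n, x = n * e}) :
  exists n, m * proj1_sig x = n * e.
Proof.
destruct x as [x [n Hn]]; exists (m * n); simpl; rewrite Hn, mmulA; reflexivity.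
Qed.

Definition Me (e : M) : lmset.
Proof.
refine (@LMSet {x : M | exists m, x = m * e}
          (fun m x => exist _ (m * proj1_sig x) (Me_proof m x)) _ _).
- intros [x Hx]; apply eq_sig_hprop;
    [intros; apply proof_irrelevance | simpl; apply mmul1m].
- intros m n [x Hx]; apply eq_sig_hprop;
    [intros; apply proof_irrelevance | simpl; symmetry; apply mmulA].
Defined.

Lemma eMe_mul_proof (e : M) (He : idem e) (x y : {x : M | exists m, x = e * m * e}) :
  exists m, proj1_sig x * proj1_sig y = e * m * e.
Proof.
destruct x as [x [m Hm]], y as [y [n Hn]]; simpl.
exists (m * e * e * n); subst; rewrite !mmulA; reflexivity.
Qed.

Lemma eMe_one_proof (e : M) (He : idem e) : exists m, e = e * m * e.
Proof. exists 1; rewrite mmulm1; symmetry; exact He. Qed.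

Definition eMe (e : M) (He : idem e) : monoid.
Proof.
refine (@Monoid {x : M | exists m, x = e * m * e}
          (fun x y => exist _ (proj1_sig x * proj1_sig y) (eMe_mul_proof He x y))
          (exist _ e (eMe_one_proof He)) _ _ _).
- intros [x Hx] [y Hy] [z Hz]; apply eq_sig_hprop;
    [intros; apply proof_irrelevance | simpl; apply mmulA].
- intros [x [m Hm]]; apply eq_sig_hprop;
    [intros; apply proof_irrelevance | simpl].
  subst; rewrite !mmulA, He; reflexivity.
- intros [x [m Hm]]; apply eq_sig_hprop;
    [intros; apply proof_irrelevance | simpl].
  subst; rewrite <- !mmulA, He; reflexivity.
Defined.

(* the endomorphism monoid of a left M-set (composition f*g = f o g);
   via Diaconescu this is the monoid End(p) of the corresponding point *)
Lemma End_mul_proof (A : lmset) (f g : {f : A -> A | lhom f}) :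
  lhom (fun a => proj1_sig f (proj1_sig g a)).
Proof.
destruct f as [f Hf], g as [g Hg]; intros m a; simpl; rewrite Hg, Hf; reflexivity.
Qed.

Lemma End_one_proof (A : lmset) : lhom (fun a : A => a).
Proof. intros m a; reflexivity. Qed.

Definition End_lmset (A : lmset) : monoid.
Proof.
refine (@Monoid {f : A -> A | lhom f}
          (fun f g => exist _ (fun a => proj1_sig f (proj1_sig g a)) (End_mul_proof f g))
          (exist _ (fun a => a) (@End_one_proof A)) _ _ _).
- intros [f Hf] [g Hg] [h Hh]; apply eq_sig_hprop;
    [intros; apply proof_irrelevance | reflexivity].
- intros [f Hf]; apply eq_sig_hprop;
    [intros; apply proof_irrelevance | reflexivity].
- intros [f Hf]; apply eq_sig_hprop;
    [intros; apply proof_irrelevance | reflexivity].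
Defined.

End MSets.

Arguments FiltM : clear implicits.

(* Main.v *)
Require Import Defs.
From Stdlib Require Import List Relations ProofIrrelevance Classical ClassicalEpsilon FunctionalExtensionality Lia Arith.
Set Implicit Arguments.
Unset Strict Implicit.

Local Infix "⋆" := mmul (at level 40, left associativity).
Ltac massoc := rewrite ?mmulA; reflexivity.

Fixpoint mpow (M : monoid) (t : M) (k : nat) : M :=
  match k with 0 => mone M | S k => t ⋆ mpow t k end.

Lemma mpow_add (M : monoid) (t : M) a b : mpow t (a + b) = mpow t a ⋆ mpow t b.
Proof. induction a; simpl. - now rewrite mmul1m. - now rewrite IHa, mmulA. Qed.

Lemma mpow_S_r (M : monoid) (t : M) k : mpow t (S k) = mpow t k ⋆ t.
Proof. replace (S k) with (k + 1) by lia. rewrite mpow_add. simpl. now rewrite mmulm1. Qed.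

Lemma NoDup_map_in (A B : Type) (f : A -> B) (l : list A) :
  NoDup l -> (forall x y, In x l -> In y l -> f x = f y -> x = y) -> NoDup (map f l).
Proof.
  induction 1 as [|x l Hx Hl IH]; intros Hinj; simpl; constructor.
  - intro Hin. apply in_map_iff in Hin as [y [Hy Hy']].
    assert (y = x) by (apply Hinj; simpl; auto). subst. contradiction.
  - apply IH. intros; apply Hinj; simpl; auto.
Qed.

Lemma idem_pow (M : monoid) (HM : finite_monoid M) (t : M) :
  exists k, 1 <= k /\ idem (mpow t k).
Proof.
  destruct HM as [l Hl].
  assert (Hdup: exists i j, In i (seq 1 (S (length l))) /\ In j (seq 1 (S (length l)))
     /\ i <> j /\ mpow t i = mpow t j).
  { apply NNPP; intro Hn.
    assert (HND : NoDup (map (mpow t) (seq 1 (S (length l))))).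
    { apply NoDup_map_in. apply seq_NoDup.
      intros x y Hx Hy Hxy. apply NNPP; intro Hne. apply Hn. exists x, y; auto. }
    apply NoDup_incl_length with (l' := l) in HND; [|intros z _; auto].
    rewrite length_map, length_seq in HND. lia. }
  destruct Hdup as [i [j [Hi [Hj [Hij Heq]]]]].
  apply in_seq in Hi; apply in_seq in Hj.
  assert (Hw: exists i p, 1 <= i /\ 1 <= p /\ mpow t i = mpow t (i + p)).
  { destruct (Nat.lt_ge_cases i j).
    - exists i, (j - i). split; [lia|split;[lia|]]. now replace (i + (j - i)) with j by lia.
    - exists j, (i - j). split; [lia|split;[lia|]]. now replace (j + (i - j)) with i by lia. }
  clear i j Hi Hj Hij Heq.
  destruct Hw as [i [p [Hi [Hp Heq]]]].
  assert (Hper: forall m, i <= m -> mpow t m = mpow t (m + p)).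
  { intros m Hm. replace m with ((m - i) + i) by lia.
    rewrite <- Nat.add_assoc, (mpow_add t (m-i) i), (mpow_add t (m-i) (i+p)), <- Heq. reflexivity. }
  assert (Hper2: forall q m, i <= m -> mpow t m = mpow t (m + q * p)).
  { induction q; intros m Hm. - now rewrite Nat.add_0_r.
    - rewrite (IHq m Hm). rewrite (Hper (m + q * p)) by lia. f_equal. rewrite Nat.mul_succ_l. lia. }
  exists (i * p). split. nia.
  unfold idem. rewrite <- mpow_add. symmetry. apply Hper2. nia.
Qed.

Lemma mpow_fix (M : monoid) (A : lmset M) (t : M) (c : A) :
  lact t c = c -> forall k, lact (mpow t k) c = c.
Proof. intros H k; induction k; simpl. apply lact1. rewrite lactM, IHk. exact H. Qed.

Lemma teq_inv (M : monoid) (X : rmset M) (A : lmset M) (Z : Type) (h : X -> A -> Z)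
  (Hh : forall x m a, h (ract x m) a = h x (lact m a)) :
  forall p q, teq p q -> h (fst p) (snd p) = h (fst q) (snd q).
Proof.
  intros p q H. unfold teq in H. induction H as [p q Hs| p | p q _ IH | p q r _ IH1 _ IH2].
  - destruct Hs. simpl. apply Hh.
  - reflexivity.
  - now symmetry.
  - congruence.
Qed.

Definition RM (M : monoid) : rmset M :=
  @RMSet M M (fun x m => x ⋆ m) (@mmulm1 M) (fun x m n => mmulA x m n).

Definition lmulh (M : monoid) (m : M) : rmhom (RM M) (RM M) :=
  @RMHom M (RM M) (RM M) (fun x => m ⋆ x) (fun x p => mmulA m x p).

Lemma teq_RM (M : monoid) (A : lmset M) (x y : M) (a b : A) :
  teq (X := RM M) (x, a) (y, b) <-> lact x a = lact y b.
Proof.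
  split.
  - intro H. apply (@teq_inv M (RM M) A A (fun (x : M) (a : A) => lact x a)) in H; [exact H|].
    intros z m c. simpl. apply lactM.
  - intro H.
    assert (Hs : forall z (c : A), teq (X := RM M) (z, c) (mone M, lact z c)).
    { intros z c. pose proof (@TStep M (RM M) A (mone M) z c) as T. simpl in T.
      rewrite mmul1m in T. apply rst_step. exact T. }
    unfold teq in *. eapply rst_trans; [apply Hs|]. rewrite H. apply rst_sym, Hs.
Qed.

Lemma filt_F2 (M : monoid) (A : lmset M) (HA : filtered A) (a b : A) :
  exists m n c, lact m c = a /\ lact n c = b.
Proof.
  destruct HA as [_ [Hp _]].
  destruct (proj1 (Hp (RM M) (RM M)) (mone M) (mone M) a b) as [x [y [c [H1 H2]]]].
  apply teq_RM in H1; apply teq_RM in H2. rewrite lact1 in H1, H2.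
  exists x, y, c; auto.
Qed.

Lemma filt_F3 (M : monoid) (A : lmset M) (HA : filtered A) (a : A) (m n : M) :
  lact m a = lact n a -> exists k d, lact k d = a /\ m ⋆ k = n ⋆ k.
Proof.
  intro H. destruct HA as [_ [_ He]].
  destruct (proj2 (He (RM M) (RM M) (lmulh m) (lmulh n)) (mone M) a) as [u [a' Hu]].
  - apply teq_RM. simpl. rewrite !mmulm1. exact H.
  - destruct u as [u Hu']. simpl in *. apply teq_RM in Hu. rewrite lact1 in Hu.
    exists u, a'. split; auto.
Qed.

Definition Pcnt (M : monoid) (A : lmset M) (a : A) (n : nat) : Prop :=
  exists L : list A, length L = n /\ NoDup L /\ forall b, In b L -> exists m, b = lact m a.

Lemma preimage_list (A B : Type) (g : A -> B) (L : list B) :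
  (forall b, In b L -> exists x, b = g x) -> exists L', map g L' = L.
Proof.
  induction L as [|b L IH]; intros H. - exists nil; reflexivity.
  - destruct IH as [L' HL']. intros; apply H; simpl; auto.
    destruct (H b) as [x Hx]; simpl; auto. exists (x :: L'). simpl. congruence.
Qed.

Lemma Pcnt_bound (M : monoid) (l : list M) (Hl : forall x, In x l) (A : lmset M) (a : A) n :
  Pcnt a n -> n <= length l.
Proof.
  intros [L [HL [HND HLin]]].
  destruct (@preimage_list M A (fun m => lact m a) L HLin) as [L' HL'].
  rewrite <- HL, <- HL', length_map. apply NoDup_incl_length.
  - apply NoDup_map_inv with (f := fun m => lact m a). now rewrite HL'.
  - intros x _; auto.
Qed.

Lemma bounded_max (Q : nat -> Prop) (N : nat) :
  Q 0 -> (forall n, Q n -> n <= N) -> exists n, Q n /\ forall n', Q n' -> n' <= n.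
Proof.
  intros H0 HB.
  assert (Hk : forall k, (exists n, Q n /\ forall n', Q n' -> n' <= n) \/ (exists n, Q n /\ k <= n)).
  { induction k. - right; exists 0; auto with arith.
    - destruct IHk as [H|[n [Hn Hkn]]]; [left; auto|].
      destruct (classic (exists n'', Q n'' /\ S k <= n'')) as [H|H]; [right; auto|].
      left. exists n. split; auto. intros n' Hn'. apply NNPP; intro Hc. apply H. exists n'. split; auto. lia. }
  destruct (Hk (S N)) as [H|[n [Hn Hle]]]; auto. apply HB in Hn. lia.
Qed.

Lemma filt_gen (M : monoid) (HM : finite_monoid M) (A : lmset M) (HA : filtered A) :
  exists c : A, forall b : A, exists m, b = lact m c.
Proof.
  destruct HM as [l Hl].
  destruct (proj1 (proj1 HA)) as [a0].
  destruct (@bounded_max (fun n => exists a : A, Pcnt a n) (length l)) as [n [[c [L [HL [HND HLin]]]] Hmax]].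
  - exists a0. exists nil. repeat split; [constructor| intros b []].
  - intros n [a Ha]. eapply Pcnt_bound; eauto.
  - exists c. intro b. apply NNPP; intro Hb.
    destruct (filt_F2 HA c b) as [m0 [n0 [d [Hd1 Hd2]]]].
    assert (S n <= n); [|lia].
    apply Hmax. exists d. exists (b :: L). split; [simpl; congruence|split].
    + constructor; [|exact HND]. intro Hin. apply Hb. apply HLin; auto.
    + intros b' [Hb'|Hb'].
      * subst b'. exists n0. auto.
      * destruct (HLin b' Hb') as [m Hm]. exists (m ⋆ m0). rewrite lactM, Hd1. exact Hm.
Qed.

Lemma filt_comb (M : monoid) (A : lmset M) (HA : filtered A) (c : A)
  (Hc : forall b : A, exists m, b = lact m c) (ps : list (M * M)) :
  exists t, lact t c = c /\ forall p, In p ps -> lact (fst p) c = lact (snd p) c -> fst p ⋆ t = snd p ⋆ t.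
Proof.
  induction ps as [|[x y] ps IH].
  - exists (mone M). split; [apply lact1| intros _ []].
  - destruct IH as [t1 [Ht1 IH]].
    destruct (classic (lact x c = lact y c)) as [Hxy|Hxy].
    + assert (H: lact (x ⋆ t1) c = lact (y ⋆ t1) c) by (rewrite !lactM, Ht1; exact Hxy).
      destruct (filt_F3 HA H) as [k [d [Hkd Hk]]].
      destruct (Hc d) as [j Hj].
      exists (t1 ⋆ (k ⋆ j)). split.
      * rewrite !lactM, <- Hj, Hkd. exact Ht1.
      * intros p [Hp|Hp] Hpc.
        -- subst p. simpl. rewrite !mmulA, Hk. reflexivity.
        -- rewrite !mmulA, (IH p Hp Hpc). reflexivity.
    + exists t1. split; auto. intros p [Hp|Hp] Hpc.
      * subst p. simpl in Hpc. contradiction.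
      * auto.
Qed.

Lemma Me_fix (M : monoid) (e : M) (He : idem e) (x : Me e) : proj1_sig x ⋆ e = proj1_sig x.
Proof. destruct x as [x [n Hn]]. simpl. subst. rewrite <- mmulA, He. reflexivity. Qed.

Lemma filt_Me (M : monoid) (HM : finite_monoid M) (A : lmset M) (HA : filtered A) :
  exists e : M, idem e /\ liso A (Me e).
Proof.
  destruct (filt_gen HM HA) as [c Hc].
  pose proof HM as HM'. destruct HM' as [l Hl].
  destruct (filt_comb HA Hc (list_prod l l)) as [t [Ht Htp]].
  assert (Hker : forall x y, lact x c = lact y c -> x ⋆ t = y ⋆ t).
  { intros x y H. apply (Htp (x, y)); auto. apply in_prod; auto. }
  destruct (idem_pow HM t) as [k [Hk Hid]].
  assert (Hec : lact (mpow t k) c = c) by (apply mpow_fix; auto).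
  assert (Hker2 : forall x y, lact x c = lact y c <-> x ⋆ mpow t k = y ⋆ mpow t k).
  { intros x y; split; intro H.
    - destruct k as [|k']; [lia|]. simpl. rewrite !mmulA, (Hker x y H). reflexivity.
    - rewrite <- Hec, <- !lactM, H. reflexivity. }
  set (e := mpow t k) in *.
  exists e. split; [exact Hid|].
  assert (Hch : forall b : A, {m : M | b = lact m c}).
  { intro b. apply constructive_indefinite_description. apply Hc. }
  exists (fun b => exist (fun x => exists m, x = m ⋆ e) (proj1_sig (Hch b) ⋆ e)
             (ex_intro _ (proj1_sig (Hch b)) eq_refl) : Me e).
  exists (fun x : Me e => lact (proj1_sig x) c).
  split; [|split; [|split]].
  - intros m b. apply eq_sig_hprop; [intros; apply proof_irrelevance|]. simpl.
    destruct (Hch (lact m b)) as [m1 H1]. destruct (Hch b) as [m2 H2]. simpl.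
    rewrite mmulA. apply Hker2. rewrite lactM, <- H2, <- H1. reflexivity.
  - intros m x. simpl. apply lactM.
  - intro b. simpl. destruct (Hch b) as [m1 H1]. simpl. rewrite lactM, Hec. auto.
  - intro x. apply eq_sig_hprop; [intros; apply proof_irrelevance|]. simpl.
    destruct (Hch (lact (proj1_sig x) c)) as [m1 H1]. simpl.
    rewrite <- (Me_fix Hid x). apply Hker2. auto.
Qed.

Definition eel (M : monoid) (e : M) : Me e :=
  exist (fun x => exists m, x = m ⋆ e) e (ex_intro _ (mone M) (eq_sym (mmul1m e))).

Lemma lact_eel (M : monoid) (e : M) (He : idem e) (a : Me e) : lact (proj1_sig a) (eel e) = a.
Proof. apply eq_sig_hprop; [intros; apply proof_irrelevance|]. simpl. apply Me_fix; auto. Qed.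

Lemma teq_Me (M : monoid) (e : M) (He : idem e) (X : rmset M) (x x' : X) (a a' : Me e) :
  teq (x, a) (x', a') <-> ract x (proj1_sig a) = ract x' (proj1_sig a').
Proof.
  split.
  - intro H. apply (@teq_inv M X (Me e) X (fun x (a : Me e) => ract x (proj1_sig a))) in H; [exact H|].
    intros y m b. simpl. rewrite ractM. reflexivity.
  - intro H.
    assert (Hs : forall (y : X) (b : Me e), teq (X:=X) (ract y (proj1_sig b), eel e) (y, b)).
    { intros y b. pose proof (@TStep M X (Me e) y (proj1_sig b) (eel e)) as T.
      rewrite (lact_eel He b) in T. apply rst_step. exact T. }
    unfold teq in *. apply rst_trans with (ract x (proj1_sig a), eel e).
    + apply rst_sym, Hs.
    + rewrite H. apply Hs.
Qed.

Lemma Me_filtered (M : monoid) (e : M) (He : idem e) : filtered (Me e).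
Proof.
  split; [split|split].
  - constructor. exact (eel e).
  - intros a b. apply teq_Me; auto.
  - intros X Y. split.
    + intros x y a b. exists (ract x (proj1_sig a)), (ract y (proj1_sig b)), (eel e).
      split; apply teq_Me; auto; simpl; rewrite <- ractM; f_equal; apply Me_fix; auto.
    + intros x x' y y' a a' H1 H2. apply teq_Me in H1; auto. apply teq_Me in H2; auto.
      apply teq_Me; auto. simpl. congruence.
  - intros X Y f g. split.
    + intros u u' a a' H. apply teq_Me in H; auto. apply teq_Me; auto.
      apply eq_sig_hprop; [intros; apply proof_irrelevance|]. simpl. exact H.
    + intros x a H. apply teq_Me in H; auto. rewrite <- (rhomP f), <- (rhomP g) in H.
      exists (exist _ (ract x (proj1_sig a)) H : requal f g), (eel e).
      apply teq_Me; auto. simpl. rewrite <- ractM. f_equal. apply Me_fix; auto.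
Qed.

Lemma liso_sym (M : monoid) (A B : lmset M) : liso A B -> liso B A.
Proof. intros [f [g [Hf [Hg [H1 H2]]]]]. exists g, f. auto. Qed.

Lemma liso_trans (M : monoid) (A B C : lmset M) : liso A B -> liso B C -> liso A C.
Proof.
  intros [f [g [Hf [Hg [H1 H2]]]]] [f' [g' [Hf' [Hg' [H1' H2']]]]].
  exists (fun a => f' (f a)), (fun c => g (g' c)). unfold lhom in *.
  split; [|split; [|split]]; intros.
  - rewrite Hf, Hf'. auto.
  - rewrite Hg', Hg. auto.
  - rewrite H1'. auto.
  - rewrite H2. auto.
Qed.

Lemma Jrel_iff (M : monoid) (e f : M) :
  Jrel e f <-> (exists a b, e = a ⋆ f ⋆ b) /\ (exists c d, f = c ⋆ e ⋆ d).
Proof.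
  split.
  - intro H. split.
    + apply (H e). exists (mone M), (mone M). rewrite mmul1m, mmulm1. reflexivity.
    + apply (H f). exists (mone M), (mone M). rewrite mmul1m, mmulm1. reflexivity.
  - intros [[a [b Hab]] [c [d Hcd]]] x. split; intros [m [n Hx]]; subst x.
    + exists (m ⋆ a), (b ⋆ n). rewrite Hab. massoc.
    + exists (m ⋆ c), (d ⋆ n). rewrite Hcd. massoc.
Qed.

Lemma Jrel_op (M : monoid) (e f : M) : Jrel (M := Mop M) e f <-> Jrel e f.
Proof.
  split; intro H.
  - apply Jrel_iff in H. destruct H as [[a [b H1]] [c [d H2]]]. simpl in *.
    apply Jrel_iff. split; [exists b, a | exists d, c].
    + rewrite H1. massoc.
    + rewrite H2. massoc.
  - apply Jrel_iff in H. destruct H as [[a [b H1]] [c [d H2]]].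
    apply (proj2 (Jrel_iff (M := Mop M) e f)). simpl. split; [exists b, a | exists d, c].
    + rewrite H1. massoc.
    + rewrite H2. massoc.
Qed.

Lemma hom_apply (M : monoid) (e f : M) (He : idem e) (phi : Me e -> Me f) (Hphi : lhom phi)
  (x : Me e) : proj1_sig (phi x) = proj1_sig x ⋆ proj1_sig (phi (eel e)).
Proof.
  unfold lhom in Hphi.
  rewrite <- (lact_eel He x) at 1. rewrite Hphi. reflexivity.
Qed.

Lemma iso_J (M : monoid) (e f : M) (He : idem e) (Hf : idem f) :
  liso (Me e) (Me f) -> Jrel e f.
Proof.
  intros [phi [psi [Hphi [Hpsi [H1 H2]]]]].
  apply Jrel_iff.
  set (u := proj1_sig (phi (eel e))). set (v := proj1_sig (psi (eel f))).
  assert (Hf' : f = v ⋆ u).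
  { transitivity (proj1_sig (phi (psi (eel f)))). rewrite H2; reflexivity.
    apply hom_apply; auto. }
  assert (He' : e = u ⋆ v).
  { transitivity (proj1_sig (psi (phi (eel e)))). rewrite H1; reflexivity.
    apply hom_apply; auto. }
  destruct (proj2_sig (phi (eel e))) as [u' Hu']. fold u in Hu'.
  destruct (proj2_sig (psi (eel f))) as [v' Hv']. fold v in Hv'.
  split.
  - exists u', v. rewrite He', Hu'. reflexivity.
  - exists v', u. rewrite Hf', Hv'. reflexivity.
Qed.

Lemma rmul_proof (M : monoid) (f u : M) (Huf : u ⋆ f = u) (x : M) : exists m, x ⋆ u = m ⋆ f.
Proof. exists (x ⋆ u). rewrite <- mmulA, Huf. reflexivity. Qed.

Definition rmul_Me (M : monoid) (e f u : M) (Huf : u ⋆ f = u) (x : Me e) : Me f :=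
  exist (fun y => exists m, y = m ⋆ f) (proj1_sig x ⋆ u) (rmul_proof Huf (proj1_sig x)).

Lemma rmul_hom (M : monoid) (e f u : M) (Huf : u ⋆ f = u) : lhom (rmul_Me (e := e) Huf).
Proof.
  intros m x. apply eq_sig_hprop; [intros; apply proof_irrelevance|]. simpl.
  symmetry; apply mmulA.
Qed.

Lemma D_iso (M : monoid) (e f u v : M) (He : idem e) (Hf : idem f) :
  u ⋆ v = e -> v ⋆ u = f -> u ⋆ f = u -> v ⋆ e = v -> liso (Me e) (Me f).
Proof.
  intros Huv Hvu Huf Hve.
  exists (rmul_Me (e := e) Huf), (rmul_Me (e := f) Hve).
  split; [apply rmul_hom|split; [apply rmul_hom|split]].
  - intro x. apply eq_sig_hprop; [intros; apply proof_irrelevance|]. simpl.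
    rewrite <- mmulA, Huv. apply Me_fix; auto.
  - intro x. apply eq_sig_hprop; [intros; apply proof_irrelevance|]. simpl.
    rewrite <- mmulA, Hvu. apply Me_fix; auto.
Qed.

Lemma stab_core (M : monoid) (HM : finite_monoid M) (f g p q : M) :
  idem f -> f = p ⋆ f ⋆ q -> p ⋆ g = p -> g ⋆ f = g -> f ⋆ g = g -> g = f.
Proof.
  intros Hf Hpq Hpg Hgf Hfg.
  assert (Hn : forall n, f = mpow p n ⋆ f ⋆ mpow q n).
  { induction n. - simpl. rewrite mmul1m, mmulm1. reflexivity.
    - change (mpow p (S n)) with (p ⋆ mpow p n). rewrite (mpow_S_r q).
      transitivity (p ⋆ f ⋆ q); [exact Hpq|]. rewrite IHn at 1. massoc. }
  destruct (idem_pow HM p) as [k [Hk HP]].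
  set (P := mpow p k) in *.
  assert (HPf : P ⋆ f = f).
  { rewrite (Hn k) at 2. fold P. transitivity (P ⋆ P ⋆ f ⋆ mpow q k); [|rewrite HP; reflexivity].
    rewrite (Hn k) at 1. fold P. massoc. }
  assert (HPg : P ⋆ g = P).
  { unfold P. destruct k as [|k']; [lia|]. rewrite mpow_S_r, <- mmulA, Hpg. reflexivity. }
  assert (HfP : f = P).
  { rewrite <- HPf. rewrite <- HPg at 1. rewrite <- mmulA, Hgf. exact HPg. }
  rewrite <- Hfg, HfP at 1. rewrite HPg. exact (eq_sym HfP).
Qed.

Lemma stab (M : monoid) (HM : finite_monoid M) (f g x y : M) :
  idem f -> idem g -> g ⋆ f = g -> f ⋆ g = g -> f = x ⋆ g ⋆ y -> g = f.
Proof.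
  intros Hf Hg Hgf Hfg Hxy.
  apply (stab_core HM (p := f ⋆ x ⋆ g) (q := g ⋆ y ⋆ f)); auto.
  - transitivity (f ⋆ (x ⋆ (g ⋆ f ⋆ g) ⋆ y) ⋆ f); [|massoc].
    rewrite Hgf, Hg, <- Hxy. unfold idem in Hf. rewrite Hf, Hf. reflexivity.
  - rewrite <- mmulA, Hg. reflexivity.
Qed.

Lemma J_iso (M : monoid) (HM : finite_monoid M) (e f : M) (He : idem e) (Hf : idem f) :
  Jrel e f -> liso (Me e) (Me f).
Proof.
  intro H. apply Jrel_iff in H. destruct H as [[a [b Hab]] [c [d Hcd]]].
  unfold idem in He, Hf.
  assert (Huv : (e ⋆ a ⋆ f) ⋆ (f ⋆ b ⋆ e) = e).
  { transitivity (e ⋆ (a ⋆ (f ⋆ f) ⋆ b) ⋆ e); [massoc|]. rewrite Hf, <- Hab, He, He. reflexivity. }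
  assert (Huf : (e ⋆ a ⋆ f) ⋆ f = e ⋆ a ⋆ f) by (rewrite <- mmulA, Hf; reflexivity).
  assert (Hve : (f ⋆ b ⋆ e) ⋆ e = f ⋆ b ⋆ e) by (rewrite <- mmulA, He; reflexivity).
  assert (Hvf : f ⋆ (f ⋆ b ⋆ e) = f ⋆ b ⋆ e) by (rewrite !mmulA, Hf; reflexivity).
  revert Huv Huf Hve Hvf.
  generalize (e ⋆ a ⋆ f) (f ⋆ b ⋆ e). intros u v Huv Huf Hve Hvf.
  apply (D_iso (u := u) (v := v)); auto.
  apply (stab HM (x := c ⋆ u) (y := v ⋆ d)); auto.
  - unfold idem. transitivity (v ⋆ (u ⋆ v) ⋆ u); [massoc|]. rewrite Huv, Hve. reflexivity.
  - rewrite <- mmulA, Huf. reflexivity.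
  - rewrite mmulA, Hvf. reflexivity.
  - transitivity (c ⋆ (u ⋆ v) ⋆ (u ⋆ v) ⋆ d); [|massoc]. rewrite Huv, <- (mmulA c e e), He. exact Hcd.
Qed.

Lemma eMe_in (M : monoid) (e : M) (He : idem e) (F : Me e -> Me e) (HF : lhom F) :
  exists m, proj1_sig (F (eel e)) = e ⋆ m ⋆ e.
Proof.
  assert (H1 : proj1_sig (F (eel e)) = e ⋆ proj1_sig (F (eel e))) by exact (hom_apply He HF (eel e)).
  destruct (proj2_sig (F (eel e))) as [n Hn]. exists n. rewrite H1, Hn. apply mmulA.
Qed.

Lemma eMe_r (M : monoid) (e s : M) (He : idem e) : (exists m, s = e ⋆ m ⋆ e) -> s ⋆ e = s.
Proof. intros [m Hm]. subst. rewrite <- mmulA, He. reflexivity. Qed.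

Lemma eMe_l (M : monoid) (e s : M) (He : idem e) : (exists m, s = e ⋆ m ⋆ e) -> e ⋆ s = s.
Proof. intros [m Hm]. subst. rewrite !mmulA, He. reflexivity. Qed.

Definition End_to (M : monoid) (e : M) (He : idem e) (F : End_lmset (Me e)) : Mop (eMe He) :=
  exist (fun x => exists m, x = e ⋆ m ⋆ e) (proj1_sig (proj1_sig F (eel e))) (eMe_in He (proj2_sig F)).

Definition End_from (M : monoid) (e : M) (He : idem e) (s : Mop (eMe He)) : End_lmset (Me e) :=
  exist (fun f : Me e -> Me e => lhom f) (rmul_Me (e := e) (eMe_r He (proj2_sig s))) (rmul_hom _).

Lemma End_iso (M : monoid) (e : M) (He : idem e) :
  mon_iso (End_lmset (Me e)) (Mop (eMe He)).
Proof.
  exists (@End_to M e He), (@End_from M e He).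
  split; [|split; [|split]].
  - intros [F HF]. apply eq_sig_hprop; [intros; apply proof_irrelevance|]. simpl.
    apply functional_extensionality; intro x.
    apply eq_sig_hprop; [intros; apply proof_irrelevance|]. simpl.
    symmetry; apply hom_apply; auto.
  - intros [s Hs]. apply eq_sig_hprop; [intros; apply proof_irrelevance|]. simpl.
    apply eMe_l; auto.
  - apply eq_sig_hprop; [intros; apply proof_irrelevance|]. reflexivity.
  - intros [F HF] [G HG]. apply eq_sig_hprop; [intros; apply proof_irrelevance|]. simpl.
    apply hom_apply; auto.
Qed.

Lemma filt_Me_sig (M : monoid) (HM : finite_monoid M) (A : lmset M) (HA : filtered A) :
  {e : M | idem e /\ liso A (Me e)}.
Proof. apply constructive_indefinite_description. apply filt_Me; auto. Qed.

Theorem corollary3p15 (M : monoid) (HM : finite_monoid M) :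
  (* (i) |F_M| = |F_{M^op}|: a bijection between isomorphism classes *)
  (exists F : FiltM M -> FiltM (Mop M),
     (forall A B : FiltM M,
        liso (proj1_sig A) (proj1_sig B) <->
        liso (proj1_sig (F A)) (proj1_sig (F B))) /\
     (forall C : FiltM (Mop M), exists A : FiltM M,
        liso (proj1_sig (F A)) (proj1_sig C))) /\
  (* (ii) End(p) ~= (eMe)^op for the point p given by Me *)
  (forall (e : M) (He : idem e),
     mon_iso (End_lmset (Me e)) (Mop (eMe He))) /\
  (* (iii) F_M ~= Idem_J(M), [Me] |-> J-class of e *)
  ((forall e : M, idem e -> filtered (Me e)) /\
   (forall A : lmset M, filtered A ->
      exists e : M, idem e /\ liso A (Me e)) /\
   (forall e f : M, idem e -> idem f ->
      (liso (Me e) (Me f) <-> Jrel e f))).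
Proof.
  split; [|split].
  - assert (HMo : finite_monoid (Mop M)) by exact HM.
    set (ch := fun A : FiltM M => filt_Me_sig HM (proj2_sig A)).
    exists (fun A => exist (fun B : lmset (Mop M) => filtered B)
               (Me (M := Mop M) (proj1_sig (ch A)))
               (@Me_filtered (Mop M) (proj1_sig (ch A)) (proj1 (proj2_sig (ch A))))).
    split.
    + intros A B. simpl.
      destruct (proj2_sig (ch A)) as [HeA HA]. destruct (proj2_sig (ch B)) as [HeB HB].
      split; intro H.
      * apply (@J_iso (Mop M) HMo); [exact HeA|exact HeB|].
        apply Jrel_op. apply iso_J; auto.
        exact (liso_trans (liso_sym HA) (liso_trans H HB)).
      * assert (H' : liso (Me (proj1_sig (ch A))) (Me (proj1_sig (ch B)))).
        { apply J_iso; auto. apply Jrel_op. apply (@iso_J (Mop M)); auto. }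
        exact (liso_trans HA (liso_trans H' (liso_sym HB))).
    + intros [C HC]. destruct (@filt_Me (Mop M) HMo C HC) as [e [He HCe]].
      exists (exist (fun B : lmset M => filtered B) (Me (M := M) e) (@Me_filtered M e He)).
      simpl.
      destruct (proj2_sig (ch (exist (fun B : lmset M => filtered B) (Me (M := M) e) (@Me_filtered M e He))))
        as [He' H'].
      apply iso_J in H'; auto.
      apply (proj2 (Jrel_op _ _)) in H'.
      apply (@J_iso (Mop M) HMo) in H'; auto.
      exact (liso_trans (liso_sym H') (liso_sym HCe)).
  - intros e He. apply End_iso.
  - split; [|split].
    + intros e He. apply Me_filtered; auto.
    + intros A HA. apply filt_Me; auto.
    + intros e f He Hf. split; [apply iso_J; auto | apply J_iso; auto].
Qed.
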